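(* Let $S$ be a finite set of states, $B\subseteq S$, $P_\pi$ the transition matrix of a finite Markov chain on $S$, and $0<\gamma_B<1$, $\gamma=1$. Let $\neg B_R$ be the set of states in rejecting bottom strongly connected components, $\neg B_{T,A}=S\setminus(B\cup\neg B_R)$, $X=B\cup\neg B_{T,A}$, $m=|B|$, $n'=|\neg B_{T,A}|$. Let $T$ be the restriction of $P_\pi$ to $X\times X$ (rows and columns ordered with $B$ first), and $$H=\begin{bmatrix}\gamma_B I_{m\times m}&\\&\gamma I_{n'\times n'}\end{bmatrix}T .$$ Let $(D_{(k)})_{k\ge0}$ be a sequence of vectors in $\mathbb{R}^{X}$ with $D_{(k+1)}=HD_{(k)}$ for all $k$ (e.g. the approximation error of dynamic-programming iterates for the surrogate reward restricted to $X$). Then there exist a constant $c\in(0,1)$ and a positive integer $N\le n'+1$ such that $\|D_{(k+N)}\|_\infty\le c\,\|D_{(k)}\|_\infty$ for all $k$.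
   Context: A strongly connected component (communicating class) of a finite Markov chain is a maximal set of mutually communicating states; a bottom strongly connected component (BSCC) is one with no outgoing transitions. A BSCC is rejecting if it contains no state of $B$, and accepting otherwise. *)

(* Defs.v *)
From HB Require Import structures.
From mathcomp Require Import all_boot all_order all_algebra.
Set Implicit Arguments. Unset Strict Implicit. Unset Printing Implicit Defensive.
Import Order.TTheory GRing.Theory Num.Theory.
Local Open Scope ring_scope.

Section MC.
Variables (R : realFieldType) (S : finType).

Definition stochastic (P : S -> S -> R) : Prop :=
  (forall x y, 0 <= P x y) /\ (forall x, \sum_(y : S) P x y = 1).

Definition trans_rel (P : S -> S -> R) : rel S := fun x y => 0 < P x y.
Definition reach (P : S -> S -> R) (x y : S) : bool := connect (trans_rel P) x y.

Definition scc (P : S -> S -> R) (x : S) : {set S} :=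
  [set y | reach P x y && reach P y x].

Definition closed_class (P : S -> S -> R) (C : {set S}) : bool :=
  [forall u in C, forall v, (0 < P u v) ==> (v \in C)].

(* states lying in a rejecting bottom SCC (one containing no state of B) *)
Definition negBR (P : S -> S -> R) (B : {set S}) : {set S} :=
  [set x | closed_class P (scc P x) && [disjoint scc P x & B]].

Definition negBTA (P : S -> S -> R) (B : {set S}) : {set S} :=
  ~: (B :|: negBR P B).

Definition Xset (P : S -> S -> R) (B : {set S}) : {set S} :=
  B :|: negBTA P B.

(* H = diag(gammaB I_m, gamma I_n') T, T = P restricted to X x X, gamma = 1;
   vectors in R^X are represented by functions S -> R, only values on X matter *)
Definition Hop (P : S -> S -> R) (B : {set S}) (gB : R) (D : S -> R) (x : S) : R :=
  (if x \in B then gB else 1) * \sum_(y in Xset P B) P x y * D y.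

Definition normX (P : S -> S -> R) (B : {set S}) (D : S -> R) : R :=
  \big[Num.max/0]_(x in Xset P B) `|D x|.

End MC.

(* Main.v *)
Require Import Defs.
From HB Require Import structures.
From mathcomp Require Import all_boot all_order all_algebra.
From mathcomp Require Import zify.
Import Order.TTheory GRing.Theory Num.Theory.
Local Open Scope ring_scope.

Lemma reach_closed (R : realFieldType) (S : finType) (P : S -> S -> R) (K : {set S}) :
  (forall u v, u \in K -> 0 < P u v -> v \in K) ->
  forall x y, x \in K -> reach P x y -> y \in K.
Proof.
move=> HK x y xK /connectP [p pth ->].
elim: p x xK pth => [|a p IH] x xK //= /andP [xa pth].
apply: IH pth; exact: HK xa.
Qed.

Lemma closed_negBR (R : realFieldType) (S : finType) (P : S -> S -> R) (B K : {set S}) z0 :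
  z0 \in K -> (forall u v, u \in K -> 0 < P u v -> v \in K) -> [disjoint K & B] ->
  exists2 z, z \in K & z \in negBR P B.
Proof.
move=> z0K HK dKB.
pose rs z := [set y | reach P z y].
case: (arg_minnP (fun z => #|rs z|) z0K) => z zK zmin.
exists z => //.
have sccK : scc P z \subset K.
  apply/subsetP => y; rewrite inE => /andP [zy _]; exact: reach_closed zK zy.
rewrite inE; apply/andP; split; last exact: disjointWl sccK dKB.
apply/forall_inP => u; rewrite inE => /andP [zu uz]; apply/forallP => v; apply/implyP => uv.
have zv : reach P z v by apply: connect_trans zu (connect1 _).
have vK : v \in K by exact: reach_closed zK zv.
have sub : rs v \subset rs z.
  apply/subsetP => y; rewrite !inE => vy; exact: connect_trans zv vy.
have : rs v == rs z by rewrite eqEcard sub zmin.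
move/eqP => e.
have : z \in rs v by by rewrite e inE; apply: connect0.
rewrite !inE => vz. by rewrite zv vz.
Qed.

Fixpoint wf (R : realFieldType) (S : finType) (P : S -> S -> R) (B : {set S}) (gB : R)
  (j : nat) : S -> R :=
  match j with 0 => fun _ => 1 | j.+1 => Hop P B gB (@wf R S P B gB j) end.
Arguments wf {R S}.

Lemma sumX_split (R : realFieldType) (S : finType) (P : S -> S -> R) (B : {set S}) x :
  \sum_(y : S) P x y = \sum_(y in Xset P B) P x y + \sum_(y | y \notin Xset P B) P x y.
Proof. by rewrite (bigID (fun y => y \in Xset P B)). Qed.
Arguments sumX_split {R S P}.

Lemma sumX_le1 (R : realFieldType) (S : finType) (P : S -> S -> R) (B : {set S}) x :
  stochastic P -> \sum_(y in Xset P B) P x y <= 1.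
Proof.
move=> [P0 P1]; rewrite -(P1 x) (sumX_split B) lerDl; apply: sumr_ge0 => y _; exact: P0.
Qed.
Arguments sumX_le1 {R S P}.

Lemma sum_le1 (R : realFieldType) (S : finType) (P : S -> S -> R) (B : {set S}) (f : S -> R) x :
  stochastic P -> (forall y, 0 <= f y <= 1) ->
  0 <= \sum_(y in Xset P B) P x y * f y <= 1.
Proof.
move=> [P0 P1] hf; apply/andP; split.
  apply: sumr_ge0 => y _; apply: mulr_ge0; first exact: P0; by case/andP: (hf y).
apply: le_trans (sumX_le1 B x (conj P0 P1)).
apply: ler_sum => y _; apply: ler_piMr; first exact: P0; by case/andP: (hf y).
Qed.

Lemma sum_lt1 (R : realFieldType) (S : finType) (P : S -> S -> R) (B : {set S}) (f : S -> R) x y :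
  stochastic P -> (forall y, 0 <= f y <= 1) -> 0 < P x y ->
  (y \notin Xset P B) || (f y < 1) ->
  \sum_(y in Xset P B) P x y * f y < 1.
Proof.
move=> [P0 P1] hf Pxy.
have le1 : forall z, P x z * f z <= P x z.
  by move=> z; apply: ler_piMr; first exact: P0; case/andP: (hf z).
case: (boolP (y \in Xset P B)) => yX /= H.
  apply: lt_le_trans (sumX_le1 B x (conj P0 P1)).
  rewrite (bigD1 y) //= [X in _ < X](bigD1 y) //=.
  apply: ltr_leD; first by rewrite gtr_pMr.
  by apply: ler_sum => z _; apply: le1.
apply: le_lt_trans (_ : \sum_(z in Xset P B) P x z < 1).
  by apply: ler_sum => z _; apply: le1.
have : \sum_(z in Xset P B) P x z + P x y <= 1.
  rewrite -(P1 x) (sumX_split B) lerD2l (bigD1 y) //= lerDl.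
  apply: sumr_ge0 => z _; exact: P0.
move=> h; apply: lt_le_trans h; by rewrite ltrDl.
Qed.
Arguments sum_le1 {R S P}.
Arguments sum_lt1 {R S P}.

Lemma w_bnd (R : realFieldType) (S : finType) (P : S -> S -> R) (B : {set S}) (gB : R) :
  stochastic P -> 0 < gB -> gB < 1 -> forall j x, 0 <= wf P B gB j x <= 1.
Proof.
move=> st g0 g1; elim=> [|j IH] x /=; first by rewrite ler01 lexx.
rewrite /Hop; case/andP: (sum_le1 B _ x st IH) => s0 s1.
have gx0 : 0 <= (if x \in B then gB else 1) by case: ifP => _ //; exact: ltW.
have gx1 : (if x \in B then gB else 1) <= 1 by case: ifP => _ //; exact: ltW.
apply/andP; split; first exact: mulr_ge0.
by rewrite mulr_ile1.
Qed.
Arguments w_bnd {R S P B gB}.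

Lemma w_lt (R : realFieldType) (S : finType) (P : S -> S -> R) (B : {set S}) gB j x :
  stochastic P -> 0 < gB -> gB < 1 ->
  (x \in B) || [exists y, (0 < P x y) && ((y \notin Xset P B) || (wf P B gB j y < 1))] ->
  wf P B gB j.+1 x < 1.
Proof.
move=> st g0 g1 /orP [xB | /existsP [y /andP [Pxy H]]] /=; rewrite /Hop.
  have /andP [s0 s1] := sum_le1 B (wf P B gB j) x st (w_bnd st g0 g1 j); rewrite xB.
  apply: le_lt_trans g1; by rewrite ler_piMr // ltW.
have := sum_lt1 B (wf P B gB j) x y st (w_bnd st g0 g1 j) Pxy H.
have /andP [s0 s1] := sum_le1 B (wf P B gB j) x st (w_bnd st g0 g1 j); move=> hs.
case: ifP => _; last by rewrite mul1r.
apply: le_lt_trans hs; by rewrite ler_piMl // ltW.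
Qed.

Lemma w_decr (R : realFieldType) (S : finType) (P : S -> S -> R) (B : {set S}) (gB : R) :
  stochastic P -> 0 < gB -> gB < 1 -> forall j x, wf P B gB j.+1 x <= wf P B gB j x.
Proof.
move=> st g0 g1; elim=> [|j IH] x; first by case/andP: (@w_bnd R S P B gB st g0 g1 1 x).
rewrite /= /Hop; apply: ler_wpM2l; first by case: ifP => _ //; exact: ltW.
apply: ler_sum => y _; apply: ler_wpM2l; [by case: st | exact: IH].
Qed.
Arguments w_lt {R S P B gB}.
Arguments w_decr {R S P B gB}.

Definition Bad (R : realFieldType) (S : finType) (P : S -> S -> R) (B : {set S}) (gB : R) j :=
  [set x in negBTA P B | 1 <= wf P B gB j.+1 x].
Arguments Bad {R S}.

Lemma bad_closed (R : realFieldType) (S : finType) (P : S -> S -> R) (B : {set S}) (gB : R) (j : nat) :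
  stochastic P -> 0 < gB -> gB < 1 ->
  forall x v, x \in Bad P B gB j.+1 -> 0 < P x v -> v \in Bad P B gB j.
Proof.
move=> st g0 g1 x v; rewrite inE => /andP [xT xw] xv.
apply/negPn/negP => vNB.
have H : (v \notin Xset P B) || (wf P B gB j.+1 v < 1).
  case: (boolP (v \in Xset P B)) => vX //=.
  case: (boolP (v \in B)) => vB.
    by apply: w_lt => //; rewrite vB.
  rewrite ltNge; apply/negP => vw; move/negP: vNB; apply; rewrite inE vw andbT.
  by move: vX; rewrite /Xset inE (negPf vB).
have : wf P B gB j.+2 x < 1.
  apply: w_lt => //; apply/orP; right; apply/existsP; exists v; by rewrite xv H.
by rewrite ltNge xw.
Qed.
Arguments bad_closed {R S P B gB j}.

Lemma bad_sub (R : realFieldType) (S : finType) (P : S -> S -> R) (B : {set S}) (gB : R) (j : nat) :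
  stochastic P -> 0 < gB -> gB < 1 -> Bad P B gB j.+1 \subset Bad P B gB j.
Proof.
move=> st g0 g1; apply/subsetP => x; rewrite !inE => /andP [-> xw] /=.
apply: le_trans xw _; exact: w_decr.
Qed.
Arguments bad_sub {R S P B gB}.

Lemma bad_card (R : realFieldType) (S : finType) (P : S -> S -> R) (B : {set S}) (gB : R) :
  stochastic P -> 0 < gB -> gB < 1 ->
  forall j, Bad P B gB j = set0 \/ (#|Bad P B gB j| + j <= #|negBTA P B|)%N.
Proof.
move=> st g0 g1; elim=> [|j IH].
  right; rewrite addn0; apply: subset_leq_card; apply/subsetP => x; rewrite inE; by case/andP.
have sub := bad_sub j st g0 g1.
case: IH => [E|IH].
  left; apply/eqP; rewrite -subset0 -E; exact: sub.
case: (boolP (Bad P B gB j.+1 == Bad P B gB j)) => [/eqP E|NE].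
  left; case: (set_0Vmem (Bad P B gB j)) => [E0|[z0 z0B]]; first by rewrite E.
  have cl : forall u v, u \in Bad P B gB j -> 0 < P u v -> v \in Bad P B gB j.
    by move=> u v; rewrite -{1}E; exact: bad_closed.
  have dj : [disjoint Bad P B gB j & B].
    rewrite disjoint_subset; apply/subsetP => x; rewrite inE => /andP [+ _].
    by rewrite /negBTA !inE negb_or => /andP [].
  have [z zK zR] := @closed_negBR R S P B (Bad P B gB j) z0 z0B cl dj.
  exfalso; move: zK; rewrite inE /negBTA => /andP [].
  by rewrite in_setC in_setU zR orbT.
right; have pr : Bad P B gB j.+1 \proper Bad P B gB j by rewrite properEneq NE sub.
have := proper_card pr; move: IH; rewrite addnS.
move=> h1 h2; apply: leq_trans h1; by rewrite ltn_add2r.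
Qed.

Lemma normX_ge0 (R : realFieldType) (S : finType) (P : S -> S -> R) (B : {set S}) (D : S -> R) :
  0 <= normX P B D.
Proof.
rewrite /normX; apply: (big_ind (fun v => 0 <= v)) => //.
by move=> a b a0 _; rewrite le_max a0.
Qed.

Lemma le_normX (R : realFieldType) (S : finType) (P : S -> S -> R) (B : {set S}) (D : S -> R) x :
  x \in Xset P B -> `|D x| <= normX P B D.
Proof. by move=> xX; rewrite /normX (bigD1 x) //= le_max lexx. Qed.

Lemma normX_le (R : realFieldType) (S : finType) (P : S -> S -> R) (B : {set S}) (D : S -> R) a :
  (forall x, x \in Xset P B -> `|D x| <= a) -> 0 <= a -> normX P B D <= a.
Proof.
move=> H a0; rewrite /normX; apply: (big_ind (fun v => v <= a)) => //.
by move=> u v hu hv; rewrite ge_max hu hv.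
Qed.

Lemma D_bound (R : realFieldType) (S : finType) (B : {set S})
  (P : S -> S -> R) (gB : R) (D : nat -> S -> R) :
  stochastic P -> 0 < gB -> gB < 1 ->
  (forall k x, x \in Xset P B -> D k.+1 x = Hop P B gB (D k) x) ->
  forall k j x, x \in Xset P B -> `|D (k + j)%N x| <= wf P B gB j x * normX P B (D k).
Proof.
move=> st g0 g1 HD k; elim=> [|j IH] x xX.
  by rewrite addn0 mul1r le_normX.
rewrite addnS HD //= /Hop normrM.
have gx0 : 0 <= (if x \in B then gB else 1) by case: ifP => _ //; exact: ltW.
rewrite (ger0_norm gx0) -mulrA; apply: ler_wpM2l => //.
rewrite mulr_suml; apply: le_trans (ler_norm_sum _ _ _) _.
apply: ler_sum => y yX; rewrite normrM (ger0_norm (proj1 st x y)) -mulrA.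
by apply: ler_wpM2l; [exact: (proj1 st) | exact: IH].
Qed.
Arguments bad_card {R S P B gB}.
Arguments D_bound {R S B P gB D}.

Theorem lemma3 (R : realFieldType) (S : finType) (B : {set S})
  (P : S -> S -> R) (gB : R) (D : nat -> S -> R) :
  stochastic P -> 0 < gB -> gB < 1 ->
  (forall k x, x \in Xset P B -> D k.+1 x = Hop P B gB (D k) x) ->
  exists (c : R) (N : nat),
    [/\ 0 < c, c < 1, (0 < N)%N, (N <= #|negBTA P B|.+1)%N &
      forall k, normX P B (D (k + N)%N) <= c * normX P B (D k)].
Proof.
move=> st g0 g1 HD.
set n := #|negBTA P B|.
have B0 : Bad P B gB n = set0.
  case: (@bad_card R S P B gB st g0 g1 n) => // h.
  apply: cards0_eq; apply/eqP; by rewrite -leqn0 -(leq_add2r n) add0n.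
have wlt : forall x, x \in Xset P B -> wf P B gB n.+1 x < 1.
  move=> x xX; case: (boolP (x \in B)) => xB.
    by apply: w_lt => //; rewrite xB.
  have xT : x \in negBTA P B by move: xX; rewrite /Xset inE (negPf xB).
  have : x \notin Bad P B gB n by rewrite B0 inE.
  by rewrite inE xT /= ltNge.
pose m := \big[Num.max/0]_(x in Xset P B) wf P B gB n.+1 x.
have m1 : m < 1.
  rewrite /m; apply: (big_ind (fun v => v < 1)) => //.
  by move=> u v hu hv; rewrite gt_max hu hv.
exists (Num.max (1/2) m), n.+1; split => //.
- by rewrite lt_max; apply/orP; left; rewrite divr_gt0.
- rewrite gt_max m1 andbT; by rewrite ltr_pdivrMr // mul1r ltr1n.
move=> k; apply: normX_le; last by apply: mulr_ge0; [rewrite le_max; apply/orP; left; rewrite divr_ge0 | exact: normX_ge0].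
move=> x xX; apply: le_trans (@D_bound R S B P gB D st g0 g1 HD k n.+1 x xX) _.
apply: ler_wpM2r; first exact: normX_ge0.
rewrite le_max; apply/orP; right; by rewrite /m (bigD1 x) //= le_max lexx.
Qed.
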